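(* Let $\mathcal{D}$ be a $\{K_3,K_4\}$-decomposition of $K_{18}$ with $\alpha=13$, let $W$ be the set of vertices $x$ with $\alpha_x\ge 2$, and for $i\in\{0,1,2,3\}$ let $t_i$ be the number of copies of $K_3$ in $\mathcal{D}$ having exactly $i$ vertices in $W$. Then $(t_0,t_1,t_2,t_3)\neq(0,4,3,6)$.
   Context: A $\{K_3,K_4\}$-decomposition of $K_v$ is a collection of subgraphs, each isomorphic to $K_3$ or $K_4$, such that every edge of $K_v$ lies in exactly one of them. $\alpha$ is the number of copies of $K_3$ in the decomposition, and for a vertex $x$, $\alpha_x$ is the number of copies of $K_3$ in the decomposition containing $x$. *)

(* Defs.v *)
From mathcomp Require Import all_boot all_order.
Set Implicit Arguments. Unset Strict Implicit. Unset Printing Implicit Defensive.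

(* A {K3,K4}-decomposition of K_v on vertex set 'I_v: a set of blocks (vertex
   sets of the copies of K3/K4), each of size 3 or 4, such that every edge
   {x,y} (x <> y) of K_v lies in exactly one block. *)
Definition is_K34_decomp (v : nat) (D : {set {set 'I_v}}) : Prop :=
  (forall B, B \in D -> #|B| = 3 \/ #|B| = 4) /\
  (forall x y : 'I_v, x != y -> #|[set B in D | (x \in B) && (y \in B)]| = 1).

Definition triangles (v : nat) (D : {set {set 'I_v}}) : {set {set 'I_v}} :=
  [set B in D | #|B| == 3].

Definition alpha (v : nat) (D : {set {set 'I_v}}) : nat := #|triangles D|.

Definition alpha_at (v : nat) (D : {set {set 'I_v}}) (x : 'I_v) : nat :=
  #|[set B in triangles D | x \in B]|.

Definition Wset (v : nat) (D : {set {set 'I_v}}) : {set 'I_v} :=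
  [set x | 2 <= alpha_at D x].

Definition t_count (v : nat) (D : {set {set 'I_v}}) (i : nat) : nat :=
  #|[set B in triangles D | #|B :&: Wset D| == i]|.

(* Main.v *)
Require Import Defs.
From mathcomp Require Import all_boot all_order.
From mathcomp Require Import zify.

Section S.
Variable D : {set {set 'I_18}}.
Hypothesis hsz : forall B, B \in D -> #|B| = 3 \/ #|B| = 4.
Hypothesis hedge : forall x y : 'I_18, x != y ->
  #|[set B in D | (x \in B) && (y \in B)]| = 1.

Lemma sum_ind (T : finType) (S : {set T}) (Q P : pred T) :
  \sum_(B in S | Q B) (P B : nat) = #|[set B in S | Q B && P B]|.
Proof.
rewrite -sum1_card big_mkcond [RHS]big_mkcond /=.
apply: eq_bigr => B _; rewrite !inE.
by case: (B \in S); case: (Q B); case: (P B).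
Qed.

Lemma cardI_sum (T : finType) (B A : {set T}) :
  #|B :&: A| = \sum_(y in A) (y \in B : nat).
Proof.
rewrite -sum1_card big_mkcond [RHS]big_mkcond /=.
apply: eq_bigr => y _; rewrite !inE.
by case: (y \in A); case: (y \in B).
Qed.

Lemma pervertex (A : {set 'I_18}) x : x \in A ->
  \sum_(B in D | x \in B) (#|B :&: A| - 1) = #|A| - 1.
Proof.
move=> xA.
have -> : \sum_(B in D | x \in B) (#|B :&: A| - 1)
        = \sum_(B in D | x \in B) #|B :&: (A :\ x)|.
  apply: eq_bigr => B /andP [_ xB].
  by rewrite (cardsD1 x (B :&: A)) inE xB xA /= add1n subn1 /= setIDA.
under eq_bigr => B _ do rewrite cardI_sum.
rewrite exchange_big /=.
rewrite (cardsD1 x A) xA add1n subn1 /= -sum1_card.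
apply: eq_bigr => y; rewrite !inE => /andP [yx yA].
rewrite sum_ind; apply: hedge; by rewrite eq_sym.
Qed.

Lemma dc (A : {set 'I_18}) (f : {set 'I_18} -> nat) :
  \sum_(x in A) \sum_(B in D | x \in B) f B = \sum_(B in D) f B * #|B :&: A|.
Proof.
under [RHS]eq_bigr => B _ do rewrite cardI_sum big_distrr /=.
rewrite exchange_big /=.
apply: eq_bigr => y _; rewrite big_mkcondr /=; apply: eq_bigr => B _.
by case: (y \in B); rewrite /= ?muln1 ?muln0.
Qed.

Definition cnt (W : {set 'I_18}) s i :=
  \sum_(B in D) ((#|B| == s) && (#|B :&: W| == i) : nat).

Lemma decomp (W : {set 'I_18}) (F : nat -> nat -> nat) :
  \sum_(B in D) F #|B| #|B :&: W| =
  \sum_(i < 4) F 3 i * cnt W 3 i + \sum_(i < 5) F 4 i * cnt W 4 i.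
Proof.
rewrite /cnt.
under [in RHS]eq_bigr do rewrite big_distrr.
under [X in _ = _ + X]eq_bigr do rewrite big_distrr.
rewrite /= [X in X + _]exchange_big [X in _ + X]exchange_big -big_split /=.
apply: eq_bigr => B BD.
have hw : #|B :&: W| <= #|B| := subset_leq_card (subsetIl _ _).
move: (#|B :&: W|) hw => w hw.
rewrite !big_ord_recr !big_ord0 /=.
move: hw; case: (hsz _ BD) => ->;
case: w => [|[|[|[|[|w]]]]] hw //=.
all: lia.
Qed.

End S.

Theorem mainTheorem11 (D : {set {set 'I_18}}) :
  is_K34_decomp D -> alpha D = 13 ->
  (t_count D 0, t_count D 1, t_count D 2, t_count D 3) <> (0, 4, 3, 6).
Proof.
move=> [hsz hedge] _ [h0 h1 h2 h3].
set W := Wset D.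
have tc : forall i, t_count D i = cnt D W 3 i.
  move=> i; rewrite /t_count /cnt -sum1_card big_mkcond [RHS]big_mkcond /=.
  apply: eq_bigr => B _; rewrite !inE.
  by case: (B \in D); case: (#|B| == 3); case: (_ == i).
have ax : forall x, alpha_at D x = \sum_(B in D | x \in B) (#|B| == 3 : nat).
  move=> x; rewrite sum_ind /alpha_at; apply: eq_card => B.
  by rewrite !inE; case: (B \in D); case: (x \in B); case: (_ == 3).
have pv : forall x, \sum_(B in D | x \in B) (#|B :&: setT| - 1) = 17.
  by move=> x; rewrite pervertex // ?cardsT ?card_ord // inE.
have nonW : forall x, x \in ~: W -> alpha_at D x = 1.
  move=> x; rewrite !inE -ltnNge => hx.
  have := pv x.
  have -> : \sum_(B in D | x \in B) (#|B :&: setT| - 1)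
     = 2 * \sum_(B in D | x \in B) (#|B| == 3 : nat)
       + 3 * \sum_(B in D | x \in B) (#|B| == 4 : nat).
    rewrite !big_distrr -big_split /=; apply: eq_bigr => B /andP [BD _].
    by rewrite setIT; case: (hsz _ BD) => ->.
  rewrite -ax; lia.
have E2 : \sum_(B in D) (#|B| == 3) * #|B :&: W| = 28.
  rewrite (@decomp D hsz W (fun s w => (s == 3) * w)).
  rewrite !big_ord_recr !big_ord0 /= -!tc; lia.
have E1 : \sum_(B in D) (#|B| == 3) * (#|B| - #|B :&: W|) = 11.
  rewrite (@decomp D hsz W (fun s w => (s == 3) * (s - w))).
  rewrite !big_ord_recr !big_ord0 /= -!tc; lia.
have cW : #|W| = 7.
  have := @dc D (~: W) (fun B => (#|B| == 3 : nat)).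
  under eq_bigr => x xW do rewrite -ax nonW //.
  rewrite sum_nat_const muln1.
  have -> : \sum_(B in D) (#|B| == 3) * #|B :&: ~: W|
          = \sum_(B in D) (#|B| == 3) * (#|B| - #|B :&: W|).
    apply: eq_bigr => B _; rewrite -setDE -(cardsID W B); congr (_ * _); lia.
  rewrite E1 => h.
  have := cardsC W; rewrite card_ord; lia.
have E3 : \sum_(B in D) (#|B| - 1) * #|B :&: W| = 119.
  have := @dc D W (fun B => #|B :&: setT| - 1).
  under eq_bigr => x _ do rewrite pv.
  rewrite sum_nat_const cW.
  under [X in _ = X]eq_bigr => B _ do rewrite setIT.
  by move=> <-.
have E4 : \sum_(B in D) (#|B| - 1) * #|B| = 306.
  have := @dc D setT (fun B => #|B :&: setT| - 1).
  under eq_bigr => x _ do rewrite pv.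
  rewrite sum_nat_const cardsT card_ord.
  under [X in _ = X]eq_bigr => B _ do rewrite setIT.
  by move=> <-.
have E5 : \sum_(B in D) (#|B :&: W| - 1) * #|B :&: W| = 42.
  have := @dc D W (fun B => #|B :&: W| - 1).
  under eq_bigr => x xW do rewrite (@pervertex D hedge _ _ xW).
  rewrite sum_nat_const cW.
  by move=> <-.
move: E3 E4 E5.
rewrite (@decomp D hsz W (fun s w => (s - 1) * w)).
rewrite (@decomp D hsz W (fun s w => (s - 1) * s)).
rewrite (@decomp D hsz W (fun s w => (w - 1) * w)).
rewrite !big_ord_recr !big_ord0 /= -!tc; lia.
Qed.
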